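(* Let $S$ be a compact surface, $H\leq G$, $\hat p$ a tuple of distinct points of $\mathrm{int}(S)$ and $q\in\mathrm{int}(S_{\hat p})$. For $n>0$ let $$A_{q,n}=\{[wh]:\ h\in H_{\hat p},\ w\in U_{1/n}\cap G_{\hat p},\ wh(q)=q\}\subseteq\mathrm{PMCG}(S_{\hat p,q}),$$ and $F_q=\bigcap_{n>0}A_{q,n}$. Then $F_q$ is closed under multiplication. Consequently, if $A_{q,n}$ is finite for some $n>0$, then $F_q$ is a finite subgroup of $\mathrm{PMCG}(S_{\hat p,q})$.
   Context: $G=\mathrm{Homeo}_{\partial S}(S)$ with the compact-open topology; $S$ carries a fixed hyperbolic or flat Riemannian metric $d$ with geodesic boundary. $V_\epsilon=\{g\in G: d(x,gx)<\epsilon\ \forall x\in S\}$, $U_\epsilon=V_\epsilon\cap V_\epsilon^{-1}$. $G_{\hat p}$, $H_{\hat p}$ are pointwise stabilizers of the points of $\hat p$; $S_{\hat p,q}$ is $S$ with the points of $\hat p$ and $q$ removed; $\mathrm{PMCG}(S_{\hat p,q})$ is the quotient of $G_{\hat p,q}$ by homotopies fixing $\partial S$, $\hat p$ and $q$, and $[g]$ is the class of $g$. *)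

(* Defs.v *)
From Stdlib Require Import Reals List.
Open Scope R_scope.

Inductive geom := Flat | Hyperbolic.

Definition eucl_dist (z w : R * R) : R :=
  sqrt ((fst z - fst w)^2 + (snd z - snd w)^2).

(* hyperbolic distance on the upper half-plane: arcosh(1 + |z-w|^2/(2 y_z y_w)) *)
Definition hyp_dist (z w : R * R) : R :=
  let t := 1 + ((fst z - fst w)^2 + (snd z - snd w)^2) / (2 * snd z * snd w) in
  ln (t + sqrt (t * t - 1)).

Definition mdist (g : geom) : R * R -> R * R -> R :=
  match g with Flat => eucl_dist | Hyperbolic => hyp_dist end.

(* model domain: the full plane (full = true) or the closed half-plane
   {x >= 0}, bounded by the geodesic {x = 0} (full = false) *)
Definition model_dom (g : geom) (full : bool) (z : R * R) : Prop :=
  match g, full with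
  | Flat, true => True
  | Flat, false => 0 <= fst z
  | Hyperbolic, true => 0 < snd z
  | Hyperbolic, false => 0 < snd z /\ 0 <= fst z
  end.

Definition chart {S : Type} (g : geom) (full : bool) (d : S -> S -> R) (p : S)
  (Q : R * R -> Prop) : Prop :=
  exists r : R, 0 < r /\ exists f : S -> R * R,
    Q (f p) /\
    (forall a, d p a < r -> model_dom g full (f a)) /\
    (forall a b, d p a < r -> d p b < r -> mdist g (f a) (f b) = d a b) /\
    (forall z, model_dom g full z -> mdist g (f p) z < r ->
       exists a, d p a < r /\ f a = z).

Definition is_metric {S : Type} (d : S -> S -> R) : Prop :=
  (forall x y, 0 <= d x y) /\ (forall x y, d x y = 0 <-> x = y) /\
  (forall x y, d x y = d y x) /\ (forall x y z, d x z <= d x y + d y z).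

Definition seq_compact {S : Type} (d : S -> S -> R) : Prop :=
  forall u : nat -> S, exists (phi : nat -> nat) (l : S),
    (forall n, (phi n < phi (Datatypes.S n))%nat) /\
    forall eps, 0 < eps -> exists N, forall n, (N <= n)%nat -> d (u (phi n)) l < eps.

Definition bdry {S : Type} (g : geom) (d : S -> S -> R) (p : S) : Prop :=
  ~ chart g true d p (fun _ => True).

(** (S,d) is a compact surface whose metric d is the distance of a flat
    (g = Flat) or hyperbolic (g = Hyperbolic) Riemannian metric with geodesic
    boundary: a compact geodesic metric space locally isometric to the model
    plane (interior points) or to the model half-plane bounded by a geodesic
    (boundary points). *)
Definition geom_surface {S : Type} (g : geom) (d : S -> S -> R) : Prop :=
  is_metric d /\ seq_compact d /\
  (forall x y, exists m, d x m = d x y / 2 /\ d m y = d x y / 2) /\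
  (forall p, chart g true d p (fun _ => True) \/
             chart g false d p (fun z => fst z = 0)).

Definition mcont {S : Type} (d : S -> S -> R) (f : S -> S) : Prop :=
  forall x eps, 0 < eps -> exists delta, 0 < delta /\
    forall y, d x y < delta -> d (f x) (f y) < eps.

Definition is_homeo {S : Type} (d : S -> S -> R) (f : S -> S) : Prop :=
  mcont d f /\ exists finv : S -> S,
    (forall x, finv (f x) = x) /\ (forall x, f (finv x) = x) /\ mcont d finv.

Definition inG {S : Type} (g : geom) (d : S -> S -> R) (f : S -> S) : Prop :=
  is_homeo d f /\ forall x, bdry g d x -> f x = x.

Definition idS {S : Type} : S -> S := fun x => x.
Definition compS {S : Type} (f h : S -> S) : S -> S := fun x => f (h x).

Definition subgroupG {S : Type} (g : geom) (d : S -> S -> R) (H : (S -> S) -> Prop) : Prop :=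
  (forall h, H h -> inG g d h) /\ H idS /\
  (forall h1 h2, H h1 -> H h2 -> H (compS h1 h2)) /\
  (forall h hi, H h -> (forall x, hi (h x) = x) -> (forall x, h (hi x) = x) -> H hi).

Definition fixes_pts {S : Type} (ps : list S) (f : S -> S) : Prop :=
  forall x, In x ps -> f x = x.

Definition V_eps {S : Type} (d : S -> S -> R) (eps : R) (f : S -> S) : Prop :=
  forall x, d x (f x) < eps.

Definition U_eps {S : Type} (g : geom) (d : S -> S -> R) (eps : R) (f : S -> S) : Prop :=
  inG g d f /\ V_eps d eps f /\
  forall fi, (forall x, fi (f x) = x) -> (forall x, f (fi x) = x) -> V_eps d eps fi.

Definition inGpq {S : Type} (g : geom) (d : S -> S -> R) (ps : list S) (q : S)
  (f : S -> S) : Prop :=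
  inG g d f /\ fixes_pts ps f /\ f q = q.

(** Homotopy fixing ∂S, p̂ and q: equality of classes in PMCG(S_{p̂,q}). *)
Definition pmcg_eq {S : Type} (g : geom) (d : S -> S -> R) (ps : list S) (q : S)
  (f1 f2 : S -> S) : Prop :=
  exists Hm : R -> S -> S,
    (forall x, Hm 0 x = f1 x) /\ (forall x, Hm 1 x = f2 x) /\
    (forall t x eps, 0 <= t <= 1 -> 0 < eps -> exists delta, 0 < delta /\
       forall t' y, 0 <= t' <= 1 -> Rabs (t - t') < delta -> d x y < delta ->
         d (Hm t x) (Hm t' y) < eps) /\
    (forall t x, 0 <= t <= 1 -> (bdry g d x \/ In x ps \/ x = q) -> Hm t x = x).

Definition inA {S : Type} (g : geom) (d : S -> S -> R) (H : (S -> S) -> Prop)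
  (ps : list S) (q : S) (n : nat) (f : S -> S) : Prop :=
  inGpq g d ps q f /\
  exists h w, H h /\ fixes_pts ps h /\
    U_eps g d (1 / INR n) w /\ fixes_pts ps w /\
    w (h q) = q /\ pmcg_eq g d ps q f (compS w h).

Definition inF {S : Type} (g : geom) (d : S -> S -> R) (H : (S -> S) -> Prop)
  (ps : list S) (q : S) (f : S -> S) : Prop :=
  inGpq g d ps q f /\ forall n, (0 < n)%nat -> inA g d H ps q n f.

Definition finitely_many_classes {S : Type} (g : geom) (d : S -> S -> R)
  (ps : list S) (q : S) (P : (S -> S) -> Prop) : Prop :=
  exists l : list (S -> S),
    forall f, P f -> exists f', In f' l /\ pmcg_eq g d ps q f f'.

Definition pmcg_subgroup {S : Type} (g : geom) (d : S -> S -> R)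
  (ps : list S) (q : S) (P : (S -> S) -> Prop) : Prop :=
  P idS /\
  (forall f1 f2, P f1 -> P f2 -> P (compS f1 f2)) /\
  (forall f fi, P f -> (forall x, fi (f x) = x) -> (forall x, f (fi x) = x) -> P fi).

(* Main.v *)
Require Import Defs.
From Stdlib Require Import Arith Reals List Lia Lra Classical ClassicalEpsilon FinFun.
Open Scope R_scope.

Definition fixall {S : Type} (g : geom) (d : S -> S -> R) (ps : list S) (q : S) (f : S -> S) :=
  forall x, (bdry g d x \/ In x ps \/ x = q) -> f x = x.

Lemma pmcg_refl {S : Type} g (d : S -> S -> R) ps q a :
  is_metric d -> mcont d a -> fixall g d ps q a -> pmcg_eq g d ps q a a.
Proof.
  intros Hm Ha Hf. exists (fun _ x => a x). repeat split; auto.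
  intros t x eps _ Heps. destruct (Ha x eps Heps) as [dl [Hdl H]].
  exists dl; split; auto.
Qed.

Lemma pmcg_ext {S : Type} g (d : S -> S -> R) ps q a b a' b' :
  pmcg_eq g d ps q a b -> (forall x, a x = a' x) -> (forall x, b x = b' x) ->
  pmcg_eq g d ps q a' b'.
Proof.
  intros [Hm [H0 [H1 [Hc Hf]]]] Ha Hb. exists Hm. repeat split; auto.
  intro x; rewrite H0; auto. intro x; rewrite H1; auto.
Qed.

Lemma pmcg_sym {S : Type} g (d : S -> S -> R) ps q a b :
  pmcg_eq g d ps q a b -> pmcg_eq g d ps q b a.
Proof.
  intros [Hm [H0 [H1 [Hc Hf]]]]. exists (fun t x => Hm (1 - t) x).
  repeat split.
  - intro x. replace (1-0) with 1 by lra. auto.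
  - intro x. replace (1-1) with 0 by lra. auto.
  - intros t x eps Ht Heps. destruct (Hc (1-t) x eps) as [dl [Hdl H]]; [lra|auto|].
    exists dl; split; auto. intros t' y Ht' H1' H2'. apply H; auto. lra.
    replace (1 - t - (1 - t')) with (-(t - t')) by ring. rewrite Rabs_Ropp; auto.
  - intros t x Ht Hx. apply Hf; auto; lra.
Qed.

Lemma pmcg_comp {S : Type} g (d : S -> S -> R) ps q a1 b1 a2 b2 :
  pmcg_eq g d ps q a1 b1 -> pmcg_eq g d ps q a2 b2 ->
  pmcg_eq g d ps q (compS a1 a2) (compS b1 b2).
Proof.
  intros [K [K0 [K1 [Kc Kf]]]] [L [L0 [L1 [Lc Lf]]]].
  exists (fun t x => K t (L t x)). repeat split.
  - intro x; unfold compS; rewrite L0, K0; auto.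
  - intro x; unfold compS; rewrite L1, K1; auto.
  - intros t x eps Ht Heps.
    destruct (Kc t (L t x) eps Ht Heps) as [d1 [Hd1 H1]].
    destruct (Lc t x d1 Ht Hd1) as [d2 [Hd2 H2]].
    exists (Rmin d1 d2). split. apply Rmin_glb_lt; auto.
    intros t' y Ht' Htt Hxy. apply H1; auto.
    eapply Rlt_le_trans; [exact Htt|apply Rmin_l].
    apply H2; auto; eapply Rlt_le_trans; eauto; apply Rmin_r.
  - intros t x Ht Hx. rewrite Lf; auto.
Qed.

Lemma pmcg_trans {S : Type} g (d : S -> S -> R) ps q a b c :
  is_metric d -> pmcg_eq g d ps q a b -> pmcg_eq g d ps q b c -> pmcg_eq g d ps q a c.
Proof.
  intros [Hnn [Hz [Hs Htr]]] [K [K0 [K1 [Kc Kf]]]] [L [L0 [L1 [Lc Lf]]]].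
  exists (fun t x => if Rle_dec t (1/2) then K (2*t) x else L (2*t-1) x).
  repeat split.
  - intro x. destruct (Rle_dec 0 (1/2)); [|lra]. rewrite Rmult_0_r; auto.
  - intro x. destruct (Rle_dec 1 (1/2)); [lra|]. replace (2*1-1) with 1 by ring; auto.
  - intros t x eps Ht Heps.
    destruct (Kc (Rmin (2*t) 1) x (eps/2)) as [d1 [Hd1 H1]].
    { split. apply Rmin_glb; lra. apply Rmin_r. } lra.
    destruct (Lc (Rmax (2*t-1) 0) x (eps/2)) as [d2 [Hd2 H2]].
    { split. apply Rmax_r. apply Rmax_lub; lra. } lra.
    assert (Hxx : d x x = 0) by (apply Hz; auto).
    exists (Rmin d1 d2 / 2). split.
    { assert (0 < Rmin d1 d2) by (apply Rmin_glb_lt; auto). lra. }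
    intros t' y Ht' Htt Hxy.
    pose proof (Rmin_l d1 d2). pose proof (Rmin_r d1 d2).
    apply Rabs_def2 in Htt. destruct Htt as [Ha Hb].
    destruct (Rle_dec t (1/2)); destruct (Rle_dec t' (1/2)).
    + rewrite Rmin_left in H1 by lra. assert (d (K (2*t) x) (K (2*t') y) < eps/2); [|lra].
      apply H1. lra. apply Rabs_def1; lra. lra.
    + rewrite Rmin_left in H1 by lra. rewrite Rmax_right in H2 by lra.
      assert (E1 : d (K (2*t) x) (K 1 x) < eps/2).
      { apply H1. lra. apply Rabs_def1; lra. lra. }
      assert (E2 : d (L 0 x) (L (2*t'-1) y) < eps/2).
      { apply H2. lra. apply Rabs_def1; lra. lra. }
      rewrite K1 in E1. rewrite L0 in E2.
      pose proof (Htr (K (2*t) x) (b x) (L (2*t'-1) y)). lra.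
    + rewrite Rmin_right in H1 by lra. rewrite Rmax_left in H2 by lra.
      assert (E1 : d (L (2*t-1) x) (L 0 x) < eps/2).
      { apply H2. lra. apply Rabs_def1; lra. lra. }
      assert (E2 : d (K 1 x) (K (2*t') y) < eps/2).
      { apply H1. lra. apply Rabs_def1; lra. lra. }
      rewrite K1 in E2. rewrite L0 in E1.
      pose proof (Htr (L (2*t-1) x) (b x) (K (2*t') y)). lra.
    + rewrite Rmax_left in H2 by lra.
      assert (d (L (2*t-1) x) (L (2*t'-1) y) < eps/2); [|lra].
      apply H2. lra. replace (2*t-1-(2*t'-1)) with (2*(t-t')) by ring.
      apply Rabs_def1; lra. lra.
  - intros t x Ht Hx. destruct (Rle_dec t (1/2)); [apply Kf|apply Lf]; auto; lra.
Qed.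

Lemma phi_ge (phi : nat -> nat) : (forall n, (phi n < phi (Datatypes.S n))%nat) ->
  forall n, (n <= phi n)%nat.
Proof. intros H n; induction n; [lia|]. specialize (H n); lia. Qed.

Lemma unif_cont {S : Type} (d : S -> S -> R) (f : S -> S) :
  is_metric d -> seq_compact d -> mcont d f ->
  forall eps, 0 < eps -> exists delta, 0 < delta /\
    forall x y, d x y < delta -> d (f x) (f y) < eps.
Proof.
  intros [Hnn [Hz [Hs Ht]]] Hc Hf eps Heps.
  apply NNPP; intro Hn.
  assert (Hall: forall n:nat, exists p : S*S, d (fst p) (snd p) < / INR (Datatypes.S n)
     /\ eps <= d (f (fst p)) (f (snd p))).
  { intro n. apply NNPP; intro Hn2. apply Hn. exists (/ INR (Datatypes.S n)). split.
    apply Rinv_0_lt_compat, lt_0_INR; lia. intros x y Hxy. apply Rnot_le_lt. intro Hle.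
    apply Hn2. exists (x,y). simpl; auto. }
  set (p := fun n => proj1_sig (constructive_indefinite_description _ (Hall n))).
  assert (Hp : forall n, d (fst (p n)) (snd (p n)) < / INR (Datatypes.S n)
     /\ eps <= d (f (fst (p n))) (f (snd (p n)))).
  { intro n; unfold p; destruct (constructive_indefinite_description _ (Hall n)); simpl; auto. }
  destruct (Hc (fun n => fst (p n))) as [phi [l [Hphi Hconv]]].
  destruct (Hf l (eps/2)) as [dl [Hdl Hl]]; [lra|].
  destruct (Hconv (dl/2)) as [N HN]; [lra|].
  destruct (archimed_cor1 (dl/2)) as [M [HM HM0]]; [lra|].
  set (k := phi (Nat.max N M)).
  assert (Hk1 : (N <= Nat.max N M)%nat) by lia.
  specialize (HN _ Hk1). simpl in HN. fold k in HN.
  pose proof (phi_ge phi Hphi (Nat.max N M)) as Hge. fold k in Hge.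
  destruct (Hp k) as [Hp1 Hp2].
  assert (/ INR (Datatypes.S k) <= / INR M).
  { apply Rinv_le_contravar. apply lt_0_INR; lia. apply le_INR; lia. }
  assert (d l (snd (p k)) < dl).
  { pose proof (Ht l (fst (p k)) (snd (p k))). rewrite Hs in HN. lra. }
  assert (d l (fst (p k)) < dl) by (rewrite Hs; lra).
  pose proof (Hl _ H1). pose proof (Hl _ H0).
  pose proof (Ht (f (fst (p k))) (f l) (f (snd (p k)))).
  rewrite (Hs (f (fst (p k))) (f l)) in H4. lra.
Qed.

Lemma pigeon {A : Type} (l : list A) (P : nat -> A -> Prop) :
  (forall k, exists e, In e l /\ P k e) ->
  exists i j e, (i < j)%nat /\ P i e /\ P j e.
Proof.
  intro H. apply NNPP; intro Hn.
  set (c := fun k => proj1_sig (constructive_indefinite_description _ (H k))).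
  assert (Hc : forall k, In (c k) l /\ P k (c k)).
  { intro k; unfold c; destruct (constructive_indefinite_description _ (H k)); simpl; auto. }
  assert (Hinj : Injective c).
  { intros i j Heq. destruct (lt_eq_lt_dec i j) as [[Hlt|]|Hlt]; auto; exfalso; apply Hn.
    - exists i, j, (c i). split; auto. split. apply Hc. rewrite Heq. apply Hc.
    - exists j, i, (c j). split; auto. split. apply Hc. rewrite <- Heq. apply Hc. }
  pose proof (NoDup_incl_length (l:=map c (seq 0 (Datatypes.S (length l)))) (l':=l)
    (Injective_map_NoDup Hinj (seq_NoDup _ _))) as Hl.
  rewrite length_map, length_seq in Hl.
  assert (incl (map c (seq 0 (Datatypes.S (length l)))) l).
  { intros x Hx. apply in_map_iff in Hx. destruct Hx as [k [<- _]]. apply Hc. }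
  specialize (Hl H0). lia.
Qed.

Lemma mcont_comp {S : Type} (d : S -> S -> R) f h :
  mcont d f -> mcont d h -> mcont d (compS f h).
Proof.
  intros Hf Hh x eps He. destruct (Hf (h x) eps He) as [d1 [Hd1 H1]].
  destruct (Hh x d1 Hd1) as [d2 [Hd2 H2]]. exists d2; split; auto.
  intros y Hy; unfold compS; auto.
Qed.

Lemma mcont_ext {S : Type} (d : S -> S -> R) f h :
  mcont d f -> (forall x, f x = h x) -> mcont d h.
Proof.
  intros Hf He x eps Heps. destruct (Hf x eps Heps) as [d1 [Hd1 H1]].
  exists d1; split; auto. intros y Hy; rewrite <- !He; auto.
Qed.

Lemma mcont_id {S : Type} (d : S -> S -> R) : mcont d idS.
Proof. intros x eps He. exists eps; split; auto. Qed.

Lemma homeo_inv {S : Type} (d : S -> S -> R) f fi :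
  is_homeo d f -> (forall x, fi (f x) = x) -> (forall x, f (fi x) = x) -> is_homeo d fi.
Proof.
  intros [Hc [finv [H1 [H2 H3]]]] Ha Hb. split.
  - apply (mcont_ext d finv); auto. intro x. rewrite <- (Hb x) at 1. rewrite H1; auto.
  - exists f; repeat split; auto.
Qed.

Lemma homeo_comp {S : Type} (d : S -> S -> R) f h :
  is_homeo d f -> is_homeo d h -> is_homeo d (compS f h).
Proof.
  intros [Hc [fi [H1 [H2 H3]]]] [Kc [hi [K1 [K2 K3]]]]. split.
  apply mcont_comp; auto.
  exists (compS hi fi); unfold compS; repeat split.
  intro x; rewrite H1; auto. intro x; rewrite K2; auto. apply mcont_comp; auto.
Qed.

Lemma homeo_id {S : Type} (d : S -> S -> R) : is_homeo d idS.
Proof. split. apply mcont_id. exists idS; repeat split; apply mcont_id. Qed.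

Lemma inG_comp {S : Type} g (d : S -> S -> R) f h :
  inG g d f -> inG g d h -> inG g d (compS f h).
Proof.
  intros [Hf Ff] [Hh Fh]. split. apply homeo_comp; auto.
  intros x Hx; unfold compS; rewrite Fh, Ff; auto.
Qed.

Lemma inG_inv {S : Type} g (d : S -> S -> R) f fi :
  inG g d f -> (forall x, fi (f x) = x) -> (forall x, f (fi x) = x) -> inG g d fi.
Proof.
  intros [Hf Ff] Ha Hb. split. eapply homeo_inv; eauto.
  intros x Hx. rewrite <- (Ff x Hx) at 1. auto.
Qed.

Lemma inG_id {S : Type} g (d : S -> S -> R) : inG g d idS.
Proof. split. apply homeo_id. intros; reflexivity. Qed.

Lemma inGpq_comp {S : Type} g (d : S -> S -> R) ps q f h :
  inGpq g d ps q f -> inGpq g d ps q h -> inGpq g d ps q (compS f h).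
Proof.
  intros [A [B C]] [A' [B' C']]. split. apply inG_comp; auto. split.
  intros x Hx; unfold compS; rewrite B', B; auto. unfold compS; rewrite C', C; auto.
Qed.

Lemma inGpq_inv {S : Type} g (d : S -> S -> R) ps q f fi :
  inGpq g d ps q f -> (forall x, fi (f x) = x) -> (forall x, f (fi x) = x) -> inGpq g d ps q fi.
Proof.
  intros [A [B C]] Ha Hb. split. eapply inG_inv; eauto. split.
  intros x Hx. rewrite <- (B x Hx) at 1; auto. rewrite <- C at 1; auto.
Qed.

Lemma inGpq_id {S : Type} g (d : S -> S -> R) ps q : inGpq g d ps q idS.
Proof. split. apply inG_id. split. intros x _; reflexivity. reflexivity. Qed.

Lemma inGpq_fixall {S : Type} g (d : S -> S -> R) ps q f :
  inGpq g d ps q f -> fixall g d ps q f.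
Proof.
  intros [[_ A] [B C]] x [Hx|[Hx|Hx]]; auto. subst; auto.
Qed.

Lemma closure {S : Type} g (d : S -> S -> R) H ps q f1 f2 :
  geom_surface g d -> subgroupG g d H ->
  inF g d H ps q f1 -> inF g d H ps q f2 -> inF g d H ps q (compS f1 f2).
Proof.
  intros [Hmet [Hcomp _]] [HG [Hid [Hmul Hinv]]] [G1 F1] [G2 F2].
  pose proof Hmet as [Hnn [Hz [Hs Htr]]].
  split. apply inGpq_comp; auto.
  intros n Hn. split. apply inGpq_comp; auto.
  assert (Hn2 : (0 < 2 * n)%nat) by lia.
  destruct (F1 _ Hn2) as [_ [h1 [w1 [Hh1 [Hh1p [Uw1 [Hw1p [Hw1q Hp1]]]]]]]].
  pose proof (HG _ Hh1) as [[Hh1c [h1i [Hh1a [Hh1b Hh1ic]]]] Hh1bd].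
  assert (Hen : 0 < 1 / INR (2 * n)).
  { apply Rdiv_lt_0_compat. lra. apply lt_0_INR; lia. }
  destruct (unif_cont d h1 Hmet Hcomp Hh1c _ Hen) as [dl [Hdl Huc]].
  destruct (archimed_cor1 dl Hdl) as [m [Hm Hm0]].
  destruct (F2 _ Hm0) as [_ [h2 [w2 [Hh2 [Hh2p [Uw2 [Hw2p [Hw2q Hp2]]]]]]]].
  destruct Uw1 as [Gw1 [Vw1 Iw1]]. destruct Uw2 as [Gw2 [Vw2 Iw2]].
  pose proof Gw1 as [[_ [w1i [Hw1a [Hw1b _]]]] _].
  pose proof Gw2 as [[_ [w2i [Hw2a [Hw2b _]]]] _].
  specialize (Iw1 _ Hw1a Hw1b). specialize (Iw2 _ Hw2a Hw2b).
  assert (Hmd : 1 / INR m < dl) by (unfold Rdiv; rewrite Rmult_1_l; auto).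
  assert (Hh1ip : fixes_pts ps h1i).
  { intros x Hx. rewrite <- (Hh1p x Hx) at 1. auto. }
  assert (Hh1iG : inG g d h1i) by exact (inG_inv g d h1 h1i (HG _ Hh1) Hh1a Hh1b).
  assert (H2n : 1 / INR (2 * n) + 1 / INR (2 * n) = 1 / INR n).
  { rewrite mult_INR. simpl INR. assert (0 < INR n) by (apply lt_0_INR; lia). field. lra. }
  exists (compS h1 h2), (compS w1 (compS h1 (compS w2 h1i))).
  split. apply Hmul; auto.
  split. intros x Hx; unfold compS; rewrite Hh2p, Hh1p; auto.
  split.
  { split. apply inG_comp; auto. apply inG_comp; auto. apply inG_comp; auto.
    split.
    - intro x. unfold compS.
      set (u := h1 (w2 (h1i x))).
      assert (d x u < 1 / INR (2 * n)).
      { unfold u. rewrite <- (Hh1b x) at 1. apply Huc.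
        specialize (Vw2 (h1i x)). lra. }
      specialize (Vw1 u). pose proof (Htr x u (w1 u)). lra.
    - intros fi Ha Hb x.
      assert (Hfi : fi x = h1 (w2i (h1i (w1i x)))).
      { rewrite <- (Ha (h1 (w2i (h1i (w1i x))))). f_equal. unfold compS.
        rewrite Hh1a, Hw2b, Hh1b, Hw1b. reflexivity. }
      rewrite Hfi.
      set (y := w1i x).
      assert (d y (h1 (w2i (h1i y))) < 1 / INR (2 * n)).
      { rewrite <- (Hh1b y) at 1. apply Huc.
        specialize (Iw2 (h1i y)). lra. }
      specialize (Iw1 x). fold y in Iw1. pose proof (Htr x y (h1 (w2i (h1i y)))). lra. }
  split. intros x Hx; unfold compS. rewrite Hh1ip, Hw2p, Hh1p, Hw1p; auto.
  split. unfold compS. rewrite Hh1a, Hw2q. auto.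
  eapply pmcg_ext. apply (pmcg_comp _ _ _ _ _ _ _ _ Hp1 Hp2).
  intro; reflexivity. intro x; unfold compS. rewrite Hh1a. reflexivity.
Qed.

Fixpoint pw {S : Type} (f : S -> S) (k : nat) : S -> S :=
  match k with O => idS | Datatypes.S k' => compS f (pw f k') end.

Lemma inF_id {S : Type} g (d : S -> S -> R) H ps q :
  geom_surface g d -> subgroupG g d H -> inF g d H ps q idS.
Proof.
  intros [Hmet _] [HG [Hid _]]. pose proof Hmet as [Hnn [Hz _]].
  split. apply inGpq_id. intros n Hn. split. apply inGpq_id.
  assert (Hen : 0 < 1 / INR n) by (apply Rdiv_lt_0_compat; [lra|apply lt_0_INR; lia]).
  exists idS, idS. split; auto. split. intros x _; reflexivity.
  split. split. apply inG_id. split. intro x; change (d x x < 1 / INR n); rewrite (proj2 (Hz x x) eq_refl); auto.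
  intros fi Ha _ x. specialize (Ha x). change (fi x = x) in Ha. rewrite Ha. rewrite (proj2 (Hz x x) eq_refl); auto.
  split. intros x _; reflexivity. split. reflexivity.
  eapply pmcg_ext. apply pmcg_refl; auto. apply mcont_id. apply inGpq_fixall, inGpq_id.
  intro; reflexivity. intro; reflexivity.
Qed.

Lemma inF_pw {S : Type} g (d : S -> S -> R) H ps q f :
  geom_surface g d -> subgroupG g d H -> inF g d H ps q f -> forall k, inF g d H ps q (pw f k).
Proof.
  intros Hs Hsub Hf k; induction k; simpl. apply inF_id; auto. apply closure; auto.
Qed.

Lemma inF_resp {S : Type} g (d : S -> S -> R) H ps q f f' :
  is_metric d -> inF g d H ps q f' -> pmcg_eq g d ps q f f' -> inGpq g d ps q f ->
  inF g d H ps q f.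
Proof.
  intros Hm [_ Hf'] He Hg. split; auto. intros n Hn.
  destruct (Hf' n Hn) as [_ [h [w [A [B [C [D [E F]]]]]]]].
  split; auto. exists h, w. split; [auto|split; [auto|split; [auto|split; [auto|split; [auto|]]]]]. eapply pmcg_trans; eauto.
Qed.

Lemma pw_inv {S : Type} (f fi : S -> S) :
  (forall x, fi (f x) = x) -> forall i j, (i <= j)%nat -> forall x, pw fi i (pw f j x) = pw f (j - i) x.
Proof.
  intros Ha i; induction i; intros j Hij x.
  - simpl. rewrite Nat.sub_0_r. reflexivity.
  - simpl. unfold compS. rewrite IHi by lia.
    destruct (j - i)%nat eqn:E; [lia|]. simpl. unfold compS. rewrite Ha.
    f_equal. lia.
Qed.

Lemma pw_mcont {S : Type} (d : S -> S -> R) f : mcont d f -> forall k, mcont d (pw f k).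
Proof. intros Hf k; induction k; simpl. apply mcont_id. apply mcont_comp; auto. Qed.

Lemma pw_fix {S : Type} g (d : S -> S -> R) ps q f : fixall g d ps q f -> forall k, fixall g d ps q (pw f k).
Proof. intros Hf k; induction k; simpl; intros x Hx. reflexivity. unfold compS. rewrite IHk; auto. Qed.

Theorem mainTheorem4 :
  forall (S : Type) (g : geom) (d : S -> S -> R),
    geom_surface g d ->
  forall (H : (S -> S) -> Prop), subgroupG g d H ->
  forall (ps : list S) (q : S),
    NoDup ps -> (forall p, In p ps -> ~ bdry g d p) ->
    ~ bdry g d q -> ~ In q ps ->
    (forall f1 f2, inF g d H ps q f1 -> inF g d H ps q f2 ->
       inF g d H ps q (compS f1 f2)) /\
    ((exists n, (0 < n)%nat /\ finitely_many_classes g d ps q (inA g d H ps q n)) ->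
       pmcg_subgroup g d ps q (inF g d H ps q) /\
       finitely_many_classes g d ps q (inF g d H ps q)).
Proof.
  intros S g d Hgs H Hsub ps q _ _ _ _.
  pose proof Hgs as [Hmet _].
  split. intros; apply closure; auto.
  intros [n0 [Hn0 [l Hl]]].
  assert (HFA : forall f, inF g d H ps q f -> inA g d H ps q n0 f).
  { intros f [_ Hf]. auto. }
  split; [|exists l; intros f Hf; apply Hl, HFA; auto].
  split; [apply inF_id; auto|]. split; [intros; apply closure; auto|].
  intros f fi Hf Ha Hb.
  destruct (pigeon l (fun k e => pmcg_eq g d ps q (pw f k) e)) as [i [j [e [Hij [Hi Hj]]]]].
  { intro k. apply Hl. apply HFA. apply inF_pw; auto. }
  assert (Hpij : pmcg_eq g d ps q (pw f i) (pw f j)).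
  { eapply pmcg_trans; eauto. apply pmcg_sym; auto. }
  pose proof (proj1 Hf) as Gf.
  assert (Gfi : inGpq g d ps q fi) by exact (inGpq_inv g d ps q f fi Gf Ha Hb).
  assert (Cfi : mcont d fi) by exact (proj1 (proj1 (proj1 Gfi))).
  assert (Xfi : fixall g d ps q fi) by (apply inGpq_fixall; auto).
  assert (Hk : pmcg_eq g d ps q idS (pw f (j - i))).
  { eapply pmcg_ext. apply (pmcg_comp _ _ _ _ _ _ _ _ (pmcg_refl g d ps q (pw fi i) Hmet
       (pw_mcont d fi Cfi i) (pw_fix g d ps q fi Xfi i)) Hpij).
    intro x; unfold compS. rewrite pw_inv by (auto; lia). rewrite Nat.sub_diag. reflexivity.
    intro x; unfold compS. rewrite pw_inv by (auto; lia). reflexivity. }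
  destruct (j - i)%nat as [|k'] eqn:E; [lia|].
  assert (Hfk : pmcg_eq g d ps q fi (pw f k')).
  { eapply pmcg_ext. apply (pmcg_comp _ _ _ _ _ _ _ _ (pmcg_refl g d ps q fi Hmet Cfi Xfi) Hk).
    intro x; reflexivity. intro x; simpl; unfold compS; rewrite Ha; reflexivity. }
  apply (inF_resp g d H ps q fi (pw f k') Hmet); auto. apply inF_pw; auto.
Qed.
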